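(* Assume CH. Let $\mathcal L$ be a finite relational signature, $\mathscr D$ a nonprincipal ultrafilter over $\omega$, $(\mathcal M_t)_{t\in\omega}$ a $\mathscr D$-trending sequence of finite $\mathcal L$-structures, $\mathfrak M^*=\prod_t\mathcal M_t/\mathscr D$, and $\mathcal A\in\mathrm{age}(\mathfrak M^* )$ (realized as a finite substructure of $\mathfrak M^*$). If $\mathcal A$ has finite small Ramsey degree in $\mathrm{age}(\mathfrak M^* )$, then $\mathcal A$ has finite internal big Ramsey degree in $\mathfrak M^*$ and $T_{\mathrm{int}}(\mathcal A,\mathfrak M^* )\le d(\mathcal A,\mathrm{age}(\mathfrak M^* ))$.
   Context: $\mathscr D$-trending: (1) $|M_s|\le|M_t|$ for $s<t$; (2) $|M_t|\to\infty$; (3) $\{t:\mathcal M_i\hookrightarrow\mathcal M_t\}\in\mathscr D$ for each $i$. Small Ramsey degree $d(\mathcal A,\mathcal K)$: least $\ell$ such that for all $k$ and $\mathcal B\in\mathcal K$ there is $\mathcal C\in\mathcal K$ such that every $k$-coloring of $\binom{\mathcal C}{\mathcal A}$ (the copies of $\mathcal A$ in $\mathcal C$) takes at most $\ell$ values on $\binom{\mathcal B'}{\mathcal A}$ for some copy $\mathcal B'$ of $\mathcal B$ in $\mathcal C$. Internal coloring: a $k$-coloring $c^*$ of copies of $\mathcal A$ in $\mathfrak M^*$ for which there exist $Z\in\mathscr D$ and $k$-colorings $c_t$ of copies of $\mathcal A$ in $\mathcal M_t$ ($t\in Z$) with $c^*(\mathcal A')=j$ iff $\{t\in Z:\mathcal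 A'[t]\cong\mathcal A',\ c_t(\mathcal A'[t])=j\}\in\mathscr D$, where $\mathcal A'[t]$ is the substructure of $\mathcal M_t$ on the $t$-th coordinates of representatives of elements of $\mathcal A'$. $T_{\mathrm{int}}(\mathcal A,\mathfrak M^* )$ is the least $\ell$ such that for every $k$ and every internal $k$-coloring $c$ of copies of $\mathcal A$ in $\mathfrak M^*$ there is a copy $\mathfrak M'$ of $\mathfrak M^*$ inside $\mathfrak M^*$ on whose copies of $\mathcal A$ $c$ takes at most $\ell$ values; $\mathcal A$ has finite internal big Ramsey degree if such $\ell$ exists. *)

(* Defs.v *)
From mathcomp Require Import all_boot.
From Stdlib Require Import ClassicalEpsilon.

Unset Printing Implicit Defensive.

Definition CH : Prop :=
  forall A : (nat -> Prop) -> Prop,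
    (exists f : (nat -> Prop) -> nat,
        forall X Y, A X -> A Y -> f X = f Y -> X = Y) \/
    (exists g : (nat -> Prop) -> (nat -> Prop),
        (forall X, A (g X)) /\ injective g /\
        (forall Y, A Y -> exists X, g X = Y)).

Definition nonprincipal_ultrafilter (D : (nat -> Prop) -> Prop) : Prop :=
  [/\ D (fun _ => True),
      ~ D (fun _ => False),
      (forall X Y : nat -> Prop, (forall t, X t -> Y t) -> D X -> D Y) /\
      (forall X Y : nat -> Prop, D X -> D Y -> D (fun t => X t /\ Y t)),
      (forall X : nat -> Prop, D X \/ D (fun t => ~ X t))
    & (forall n : nat, ~ D (fun t => t = n))].

Record signature := Signature { sym : finType; ar : sym -> nat }.

Record Lstruct (L : signature) := LStruct {
  car : Type;
  rel : forall s : sym L, ('I_(ar L s) -> car) -> Prop }.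

Arguments rel {L} l s _.
Arguments car {L} l.

Record FStruct (L : signature) := FStructMk {
  fcar : finType;
  frel : forall s : sym L, ('I_(ar L s) -> fcar) -> Prop }.

Arguments frel {L} f s _.
Arguments fcar {L} f.

Definition toL (L : signature) (B : FStruct L) : Lstruct L :=
  @LStruct L (fcar B) (frel B).
Coercion toL : FStruct >-> Lstruct.

Section Structs.
Variable L : signature.

Definition embeds (N1 N2 : Lstruct L) : Prop :=
  exists f : car N1 -> car N2, injective f /\
    forall (s : sym L) (a : 'I_(ar L s) -> car N1),
      rel N1 s a <-> rel N2 s (fun i => f (a i)).

Definition sub_iso (N1 N2 : Lstruct L) (X : car N1 -> Prop) (Y : car N2 -> Prop)
  : Prop :=
  exists f : {x : car N1 | X x} -> car N2,
    [/\ forall x, Y (f x),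
        injective f,
        (forall y, Y y -> exists x, f x = y)
      & forall (s : sym L) (a : 'I_(ar L s) -> {x : car N1 | X x}),
          rel N1 s (fun i => proj1_sig (a i)) <-> rel N2 s (fun i => f (a i))].

Definition is_copy (N P : Lstruct L) (XP : car P -> Prop) (Y : car N -> Prop) :=
  sub_iso P N XP Y.

Definition subset_of (T : Type) (X Y : T -> Prop) := forall x, X x -> Y x.

Arguments subset_of {T} X Y.

Definition finite_set (T : Type) (X : T -> Prop) : Prop :=
  exists l : list T, forall x, X x <-> List.In x l.

Arguments finite_set {T} X.

Definition in_age (N : Lstruct L) (B : FStruct L) : Prop := embeds B N.

(* Here A is the substructure of N on XA. *)
Definition small_RD_prop (N : Lstruct L) (XA : car N -> Prop) (l : nat) : Prop :=
  forall (k : nat) (B : FStruct L), in_age N B ->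
    exists C : FStruct L, in_age N C /\
      forall c : (fcar C -> Prop) -> 'I_k,
        exists B' : fcar C -> Prop, is_copy C B (fun _ => True) B' /\
          exists S : {set 'I_k}, #|S| <= l /\
            forall Y : fcar C -> Prop, is_copy C N XA Y -> subset_of Y B' ->
              c Y \in S.

Definition least (P : nat -> Prop) (n : nat) : Prop :=
  P n /\ forall m, P m -> n <= m.

Definition finite_small_RD (N : Lstruct L) (XA : car N -> Prop) : Prop :=
  exists l, small_RD_prop N XA l.

Variable D : (nat -> Prop) -> Prop.
Variable M : nat -> FStruct L.

Definition trending : Prop :=
  [/\ (forall s t, s < t -> #|fcar (M s)| <= #|fcar (M t)|),
      (forall n, exists t0, forall t, t0 <= t -> n <= #|fcar (M t)|)
    & (forall i, D (fun t => embeds (M i) (M t)))].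

Definition seqprod := forall t, fcar (M t).

Definition Deq (x y : seqprod) : Prop := D (fun t => x t = y t).

Definition upcar : Type :=
  { C : seqprod -> Prop | exists x, C = (fun y => Deq x y) }.

Definition uprep (c : upcar) : seqprod :=
  proj1_sig (constructive_indefinite_description _ (proj2_sig c)).

Definition uprel (s : sym L) (a : 'I_(ar L s) -> upcar) : Prop :=
  D (fun t => frel (M t) s (fun i => uprep (a i) t)).

Definition ultraproduct : Lstruct L := @LStruct L upcar uprel.

Definition coord_set (Y : upcar -> Prop) (t : nat) : fcar (M t) -> Prop :=
  fun y => exists a, Y a /\ uprep a t = y.

Variable XA : upcar -> Prop.

Definition internal_coloring (k : nat) (c : (upcar -> Prop) -> 'I_k) : Prop :=
  exists Z : nat -> Prop, D Z /\
    exists ct : forall t, (fcar (M t) -> Prop) -> 'I_k,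
      forall Y : upcar -> Prop, is_copy ultraproduct ultraproduct XA Y ->
        forall j : 'I_k,
          c Y = j <->
          D (fun t => [/\ Z t,
                          sub_iso (M t) ultraproduct (coord_set Y t) Y
                        & ct t (coord_set Y t) = j]).

Definition int_BRD_prop (l : nat) : Prop :=
  forall (k : nat) (c : (upcar -> Prop) -> 'I_k), internal_coloring k c ->
    exists f : upcar -> upcar,
      (injective f /\ forall (s : sym L) (a : 'I_(ar L s) -> upcar),
                        uprel s a <-> uprel s (fun i => f (a i))) /\
      exists S : {set 'I_k}, #|S| <= l /\
        forall Y : upcar -> Prop, is_copy ultraproduct ultraproduct XA Y ->
          subset_of Y (fun y => exists x, f x = y) -> c Y \in S.

Definition finite_int_BRD : Prop := exists l, int_BRD_prop l.

End Structs.

(* Main.v *)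
Require Import Defs.
From mathcomp Require Import all_boot.
From mathcomp Require Import boolp.
From mathcomp Require wochoice classical_sets.
From Stdlib Require Import ClassicalEpsilon FunctionalExtensionality PropExtensionality ProofIrrelevance Classical.

Set Implicit Arguments.
Unset Strict Implicit.
Unset Printing Implicit Defensive.

Section UP.
Variable L : signature.
Variable D : (nat -> Prop) -> Prop.
Variable M : nat -> FStruct L.
Hypothesis HD : nonprincipal_ultrafilter D.



Lemma D_T : D (fun _ => True).
Proof. by case: HD. Qed.
Lemma D_F : ~ D (fun _ => False).
Proof. by case: HD. Qed.
Lemma D_mono (X Y : nat -> Prop) : D X -> (forall t, X t -> Y t) -> D Y.
Proof. by case: HD => _ _ [H _] _ _ DX HXY; apply: H DX. Qed.
Lemma D_and (X Y : nat -> Prop) : D X -> D Y -> D (fun t => X t /\ Y t).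
Proof. by case: HD => _ _ [_ H] _ _; apply: H. Qed.
Lemma D_ultra (X : nat -> Prop) : D X \/ D (fun t => ~ X t).
Proof. by case: HD. Qed.
Lemma D_np (n : nat) : ~ D (fun t => t = n).
Proof. by case: HD. Qed.

Lemma D_ex (X : nat -> Prop) : D X -> exists t, X t.
Proof.
move=> DX; apply: NNPP => H; apply: D_F; apply: (D_mono DX) => t Xt; apply: H; by exists t.
Qed.

Lemma D_true (X : nat -> Prop) : (forall t, X t) -> D X.
Proof. by move=> H; apply: (D_mono D_T) => t _; apply: H. Qed.

Lemma D_not (X : nat -> Prop) : ~ D X -> D (fun t => ~ X t).
Proof. by case: (D_ultra X). Qed.

Lemma D_notD (X : nat -> Prop) : D (fun t => ~ X t) -> ~ D X.
Proof.
move=> H1 H2; have [t [] //] := D_ex (D_and H2 H1).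
Qed.

Lemma D_const (P : Prop) : D (fun _ => P) -> P.
Proof. by move=> /D_ex [t]. Qed.

Lemma D_or (X Y : nat -> Prop) : D (fun t => X t \/ Y t) -> ~ D Y -> D X.
Proof.
move=> H nY; case: (D_ultra X) => // nX.
exfalso; apply: nY; apply: (D_mono (D_and H nX)) => t [[]]//.
Qed.

Lemma D_ge (n : nat) : D (fun t => n <= t).
Proof.
elim: n => [|n IH]; first by apply: D_true.
apply: (D_or (Y := fun t => t = n)); last exact: D_np.
apply: (D_mono IH) => t; rewrite leq_eqVlt => /orP [/eqP->|]; by auto.
Qed.

Lemma D_all (I : finType) (P : I -> nat -> Prop) :
  (forall i, D (P i)) -> D (fun t => forall i, P i t).
Proof.
move=> H.
suff: forall r : seq I, D (fun t => forall i, i \in r -> P i t).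
  move=> /(_ (enum I)) H2; apply: (D_mono H2) => t H3 i; apply: H3; by rewrite mem_enum.
elim=> [|a r IH]; first by apply: D_true.
apply: (D_mono (D_and (H a) IH)) => t [Ha Hr] i; rewrite inE => /orP [/eqP->//|]; exact: Hr.
Qed.

Lemma D_pigeon (I : finType) (X : nat -> Prop) (f : nat -> I) :
  D X -> exists i, D (fun t => X t /\ f t = i).
Proof.
move=> DX; apply: NNPP => H.
have H2 : forall i, D (fun t => ~ (X t /\ f t = i)).
  move=> i; apply: D_not => Hi; apply: H; by exists i.
have [t [Ht1 Ht2]] := D_ex (D_and DX (D_all H2)).
by apply: (Ht2 (f t)).
Qed.


Local Notation U := (upcar L D M).
Local Notation SP := (seqprod L M).
Local Notation rep := (uprep L D M).

Definition mk (x : SP) : U :=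
  exist _ (fun y => Deq L D M x y) (ex_intro _ x erefl).

Lemma Deq_refl (x : SP) : Deq L D M x x.
Proof. exact: (D_true). Qed.
Lemma Deq_sym (x y : SP) : Deq L D M x y -> Deq L D M y x.
Proof. rewrite /Deq => H; apply: (D_mono H) => t ->//. Qed.
Lemma Deq_trans (x y z : SP) : Deq L D M x y -> Deq L D M y z -> Deq L D M x z.
Proof. rewrite /Deq => H1 H2; apply: (D_mono (D_and H1 H2)) => t [-> ->] //. Qed.

Lemma U_ext (c1 c2 : U) : proj1_sig c1 = proj1_sig c2 -> c1 = c2.
Proof.
case: c1 c2 => [C1 p1] [C2 p2] /= E; subst; f_equal; apply: proof_irrelevance.
Qed.

Lemma mk_eq (x y : SP) : mk x = mk y <-> Deq L D M x y.
Proof.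
split.
- move=> E; have E2 : proj1_sig (mk x) = proj1_sig (mk y) by rewrite E.
  simpl in E2; have := f_equal (fun f => f y) E2 => /= ->; exact: Deq_refl.
- move=> H; apply: U_ext => /=; apply: functional_extensionality => z.
  apply: propositional_extensionality; split => H2.
  + exact: Deq_trans (Deq_sym H) H2.
  + exact: Deq_trans H H2.
Qed.

Lemma uprep_spec (c : U) : proj1_sig c = (fun y => Deq L D M (rep c) y).
Proof.
rewrite /uprep; case: (constructive_indefinite_description _ _) => x /= -> //.
Qed.

Lemma mk_uprep (c : U) : mk (rep c) = c.
Proof. apply: U_ext => /=; by rewrite uprep_spec. Qed.

Lemma uprep_mk (x : SP) : Deq L D M x (rep (mk x)).
Proof.
have := uprep_spec (mk x) => /= E.
have := f_equal (fun f => f x) E => /= E2.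
apply: Deq_sym; rewrite -E2; exact: Deq_refl.
Qed.

Lemma U_eq (u v : U) : u = v <-> Deq L D M (rep u) (rep v).
Proof. rewrite -mk_eq !mk_uprep //. Qed.

Lemma uprel_mk (s : sym L) (y : 'I_(ar L s) -> SP) :
  uprel L D M s (fun k => mk (y k)) <-> D (fun t => Defs.frel (M t) s (fun k => y k t)).
Proof.
have H : D (fun t => forall k, rep (mk (y k)) t = y k t).
  apply: D_all => // k; apply: Deq_sym; exact: uprep_mk.
rewrite /uprel; split => H2.
- apply: (D_mono (D_and H H2)) => t [E] H3; by rewrite -(functional_extensionality _ _ E).
- apply: (D_mono (D_and H H2)) => t [E] H3; by rewrite (functional_extensionality _ _ E).
Qed.

Lemma los (I : finType) (u : I -> U) :
  D (fun t => (forall i j, u i = u j <-> rep (u i) t = rep (u j) t) /\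
     forall s (b : 'I_(ar L s) -> I),
       uprel L D M s (fun k => u (b k)) <-> Defs.frel (M t) s (fun k => rep (u (b k)) t)).
Proof.
apply: D_and.
- have H : forall p : I * I, D (fun t => u p.1 = u p.2 <-> rep (u p.1) t = rep (u p.2) t).
    move=> [i j] /=; case: (classic (u i = u j)) => E.
    + rewrite E; apply: (D_true) => t; tauto.
    + have : ~ Deq L D M (rep (u i)) (rep (u j)) by rewrite -U_eq.
      rewrite /Deq => /D_not H0; apply: (D_mono H0) => t /= H1; split => // /H1 //.
  apply: (D_mono (D_all H)) => t H2 i j; exact: (H2 (i, j)).
- pose J := {s : sym L & {ffun 'I_(ar L s) -> I}}.
  have H : forall p : J, D (fun t => uprel L D M (tag p) (fun k => u (tagged p k)) <->
              Defs.frel (M t) (tag p) (fun k => rep (u (tagged p k)) t)).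
    move=> [s b] /=; rewrite /uprel; case: (classic (D (fun t => Defs.frel (M t) s (fun k => rep (u (b k)) t)))) => E.
    + apply: (D_mono E) => t; tauto.
    + apply: (D_mono (D_not E)) => t; tauto.
  apply: (D_mono (D_all H)) => t H2 s b.
  have := H2 (Tagged (fun s => {ffun 'I_(ar L s) -> I}) (finfun b)) => /=.
  set bb := finfun b; have Eb : forall k, bb k = b k by move=> k; rewrite ffunE.
  have E1 : (fun k => u (bb k)) = (fun k => u (b k)).
    by apply: functional_extensionality => k; rewrite Eb.
  have E2 : (fun k => rep (u (bb k)) t) = (fun k => rep (u (b k)) t).
    by apply: functional_extensionality => k; rewrite Eb.
  by rewrite E1 E2.
Qed.



Lemma internal_map (I : finType) (E0 : I -> I -> Prop)
  (R0 : forall s, ('I_(ar L s) -> I) -> Prop) (ka : I -> SP) (T : nat -> Prop) :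
  D T ->
  (forall t, T t -> (forall i j, ka i t = ka j t <-> E0 i j) /\
     forall s b, R0 s b <-> Defs.frel (M t) s (fun k => ka (b k) t)) ->
  (forall i j, mk (ka i) = mk (ka j) <-> E0 i j) /\
  (forall s b, R0 s b <-> uprel L D M s (fun k => mk (ka (b k)))).
Proof.
move=> DT HT; split.
- move=> i j; rewrite mk_eq /Deq; split.
  + move=> H; have [t [Ht1 Ht2]] := D_ex (D_and H DT).
    by apply/(proj1 (HT t Ht2) i j).
  + move=> H; apply: (D_mono DT) => t Ht; by apply/(proj1 (HT t Ht) i j).
- move=> s b; rewrite (uprel_mk (fun k => ka (b k))); split.
  + move=> H; apply: (D_mono DT) => t Ht; by apply/(proj2 (HT t Ht) s b).
  + move=> H; have [t [Ht1 Ht2]] := D_ex (D_and H DT).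
    by apply/(proj2 (HT t Ht2) s b).
Qed.

Local Notation N := (ultraproduct L D M).

Lemma emb_to_N (dflt : forall t, fcar (M t)) (F : FStruct L) :
  D (fun t => embeds L F (M t)) -> embeds L F N.
Proof.
move=> DF.
pose ka (i : fcar F) : SP := fun t =>
  match excluded_middle_informative (embeds L F (M t)) with
  | left h => proj1_sig (constructive_indefinite_description _ h) i
  | right _ => dflt t end.
case: (@internal_map (fcar F) (fun i j => i = j) (fun s b => Defs.frel F s b) ka _ DF); last first.
  move=> H1 H2; exists (fun i => mk (ka i)); split.
  + by move=> i j /H1.
  + move=> s a; exact: H2.
move=> t Ht; rewrite /ka; case: (excluded_middle_informative _) => // h.
case: (constructive_indefinite_description _ _) => f [fi fr] /=; split.
- move=> i j; split; [exact: fi | by move=> ->].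
- move=> s b; exact: fr.
Qed.

Lemma N_to_emb (F : FStruct L) : embeds L F N -> D (fun t => embeds L F (M t)).
Proof.
move=> [f [fi fr]].
apply: (D_mono (los f)) => t [H1 H2].
exists (fun i => rep (f i) t); split.
- move=> i j /H1 /fi //.
- move=> s a; rewrite (fr s a) /=; exact: H2.
Qed.

End UP.

Set Implicit Arguments.
Unset Strict Implicit.
Unset Printing Implicit Defensive.

Section SubIso.
Variable L : signature.

Lemma sig_eq (T : Type) (P : T -> Prop) (x y : {z | P z}) : proj1_sig x = proj1_sig y -> x = y.
Proof. case: x y => [x px] [y py] /= E; subst; f_equal; apply: proof_irrelevance. Qed.

Lemma sub_iso_inv (N1 N2 : Lstruct L) X Y : sub_iso L N1 N2 X Y -> sub_iso L N2 N1 Y X.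
Proof.
move=> [f [fY fi fs fr]].
pose ch (y : {y | Y y}) := constructive_indefinite_description _ (fs _ (proj2_sig y)).
exists (fun y => proj1_sig (proj1_sig (ch y))); split.
- move=> y; exact: proj2_sig (proj1_sig (ch y)).
- move=> y1 y2 E; apply: sig_eq.
  case: (ch y1) E => x1 /= <-; case: (ch y2) => x2 /= <- E; congr f; exact: sig_eq.
- move=> x Xx; exists (exist _ (f (exist _ x Xx)) (fY _)).
  case: (ch _) => x' /= /fi -> //.
- move=> s a.
  pose a' k := proj1_sig (ch (a k)).
  have E : (fun k => proj1_sig (a k)) = (fun k => f (a' k)).
    apply: functional_extensionality => k; rewrite /a'; case: (ch _) => x /= -> //.
  rewrite E -fr //.
Qed.

Lemma sub_iso_comp (N1 N2 N3 : Lstruct L) X Y Z :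
  sub_iso L N1 N2 X Y -> sub_iso L N2 N3 Y Z -> sub_iso L N1 N3 X Z.
Proof.
move=> [f [fY fi fs fr]] [g [gZ gi gs gr]].
exists (fun x => g (exist _ (f x) (fY x))); split.
- move=> x; exact: gZ.
- move=> x1 x2 /gi E; apply: fi; exact: (f_equal (@proj1_sig _ _) E).
- move=> z /gs [[y Yy] <-]; have [x Ex] := fs y Yy; exists x; congr g; exact: sig_eq.
- move=> s a; rewrite fr; exact: (gr s (fun k => exist _ (f (a k)) (fY (a k)))).
Qed.

Definition is_emb (N1 N2 : Lstruct L) (g : car N1 -> car N2) :=
  injective g /\ forall s (a : 'I_(ar L s) -> car N1), Defs.rel N1 s a <-> Defs.rel N2 s (fun k => g (a k)).

Lemma sub_iso_img (N1 N2 N3 : Lstruct L) X Y (g : car N2 -> car N3) :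
  is_emb g -> sub_iso L N1 N2 X Y -> sub_iso L N1 N3 X (fun z => exists y, Y y /\ g y = z).
Proof.
move=> [gi gr] [f [fY fi fs fr]].
exists (fun x => g (f x)); split.
- move=> x; by exists (f x).
- move=> x1 x2 /gi /fi //.
- move=> z [y [/fs [x <-] <-]]; by exists x.
- move=> s a; rewrite fr; exact: gr.
Qed.

Lemma sub_iso_pre (N1 N2 N3 : Lstruct L) X Y (g : car N2 -> car N3) :
  is_emb g -> sub_iso L N1 N3 X Y -> (forall z, Y z -> exists y, g y = z) ->
  sub_iso L N1 N2 X (fun y => Y (g y)).
Proof.
move=> [gi gr] [f [fY fi fs fr]] HY.
pose ch x := constructive_indefinite_description _ (HY _ (fY x)).
exists (fun x => proj1_sig (ch x)); split.
- move=> x; case: (ch x) => y /= ->; exact: fY.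
- move=> x1 x2; case: (ch x1) => y1 /= E1; case: (ch x2) => y2 /= E2 E.
  apply: fi; by rewrite -E1 -E2 E.
- move=> y /fs [x Ex]; exists x; apply: gi; case: (ch x) => y' /= ->; by [].
- move=> s a; rewrite fr gr.
  have E : (fun k => f (a k)) = (fun k => g (proj1_sig (ch (a k)))).
    apply: functional_extensionality => k; case: (ch (a k)) => y /= -> //.
  by rewrite E.
Qed.

End SubIso.

Set Implicit Arguments.
Unset Strict Implicit.
Unset Printing Implicit Defensive.

Definition countable (T : Type) (X : T -> Prop) :=
  exists e : T -> nat, forall a b, X a -> X b -> e a = e b -> a = b.

Definition good_order (T : Type) (le : T -> T -> Prop) :=
  [/\ (forall x y, le x y \/ le y x),
      (forall x y, le x y -> le y x -> x = y),
      (forall P : T -> Prop, (exists x, P x) -> exists m, P m /\ forall y, P y -> le m y)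
    & (forall x, countable (fun y => le y x /\ y <> x))].

Lemma wo_exists (T : Type) : exists le : T -> T -> Prop,
  [/\ (forall x y, le x y \/ le y x),
      (forall x y, le x y -> le y x -> x = y)
    & (forall P : T -> Prop, (exists x, P x) -> exists m, P m /\ forall y, P y -> le m y)].
Proof.
have [R HR] := wochoice.well_ordering_principle (boolp.classicType T).
have mn : forall P : T -> Prop, (exists x, P x) -> exists m, P m /\ forall y, P y -> R m y.
  move=> P [x Px].
  have : wochoice.nonempty (fun z : boolp.classicType T => boolp.asbool (P z)).
    exists x; rewrite unfold_in; exact/boolp.asboolP.
  move=> /HR [z [[Hz Hl] _]]; exists z; split.
  + by move: Hz; rewrite unfold_in => /boolp.asboolP.
  + move=> y Py; apply: Hl; rewrite unfold_in; exact/boolp.asboolP.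
exists (fun x y => R x y); split => //.
- move=> x y; have [|z [[->|->] H]] := mn (fun z => z = x \/ z = y); first by exists x; left.
  + by left; apply: H; right.
  + by right; apply: H; left.
- move=> x y Rxy Ryx.
  have Rxx : R x x by have [|z [-> H]] := mn (fun z => z = x); [exists x | apply: H].
  have Ryy : R y y by have [|z [-> H]] := mn (fun z => z = y); [exists y | apply: H].
  have : wochoice.nonempty (fun z : boolp.classicType T => boolp.asbool (z = x \/ z = y)).
    exists x; rewrite unfold_in; apply/boolp.asboolP; by left.
  move=> /HR [z [_ U]].
  have Hx := U x; have Hy := U y.
  rewrite -Hx; first (apply: Hy; split).
  + rewrite unfold_in; apply/boolp.asboolP; by right.
  + move=> w; rewrite unfold_in => /boolp.asboolP [->|->] //.
  + split; first by rewrite unfold_in; apply/boolp.asboolP; left.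
    move=> w; rewrite unfold_in => /boolp.asboolP [->|->] //.
Qed.

Lemma omega1_order (T : Type) (io : T -> (nat -> Prop)) :
  injective io -> CH -> exists le : T -> T -> Prop, good_order le.
Proof.
move=> ioi ch.
have [le0 [tot0 anti0 min0]] := wo_exists T.
case: (classic (forall x, countable (fun y => le0 y x /\ y <> x))) => Hc.
  by exists le0; split.
have [x0 [Px0 Hx0]] := min0 (fun x => ~ countable (fun y => le0 y x /\ y <> x))
   (not_all_ex_not _ _ Hc).
pose A0 := fun Z => exists y, (le0 y x0 /\ y <> x0) /\ io y = Z.
case: (ch A0) => [[f Hf]|[g [gA [gi gs]]]].
  exfalso; apply: Px0; exists (fun y => f (io y)) => a b Ha Hb E.
  apply: ioi; apply: Hf E; [by exists a | by exists b].
pose ch1 u := constructive_indefinite_description _ (gA (io u)).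
pose phi u := proj1_sig (ch1 u).
have phiP : forall u, (le0 (phi u) x0 /\ phi u <> x0) /\ io (phi u) = g (io u).
  move=> u; rewrite /phi; case: (ch1 u) => //.
have phii : injective phi.
  move=> u v E; apply: ioi; apply: gi.
  by rewrite -(proj2 (phiP u)) -(proj2 (phiP v)) E.
exists (fun x y => le0 (phi x) (phi y)); split.
- move=> x y; exact: tot0.
- move=> x y H1 H2; apply: phii; exact: anti0.
- move=> P [x Px].
  have [z [[m [Pm <-]] Hm]] := min0 (fun z => exists m, P m /\ phi m = z) (ex_intro _ (phi x) (ex_intro _ x (conj Px erefl))).
  exists m; split => // y Py; apply: Hm; by exists y.
- move=> x.
  have cx : countable (fun y => le0 y (phi x) /\ y <> phi x).
    apply: NNPP => nc.
    have := Hx0 (phi x) nc => H.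
    have [H1 H2] := proj1 (phiP x); apply: H2; exact: anti0.
  case: cx => e He; exists (fun y => e (phi y)) => a b [Ha1 Ha2] [Hb1 Hb2] E.
  apply: (phii); apply: He E.
  + split => // /phii //.
  + split => // /phii //.
Qed.

Unset Implicit Arguments.
Unset Strict Implicit.
Unset Printing Implicit Defensive.

Section Sat.
Variable L : signature.
Variable D : (nat -> Prop) -> Prop.
Variable M : nat -> FStruct L.
Hypothesis HD : nonprincipal_ultrafilter D.
Variable B : forall t, fcar (M t) -> Prop.

Local Notation U := (upcar L D M).
Local Notation SP := (seqprod L M).
Local Notation rep := (uprep L D M).
Local Notation frel := Defs.frel.
Local Notation uprel := (uprel L D M).

Definition Qs (u : U) := D (fun t => B t (rep u t)).

Definition EP (G : U -> U -> Prop) :=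
  forall (I : finType) (w : I -> U), exists h : I -> U,
    [/\ forall i y, G (w i) y -> h i = y,
        forall i, Qs (h i),
        forall i j, h i = h j <-> w i = w j
      & forall s (b : 'I_(ar L s) -> I),
          uprel s (fun k => w (b k)) <-> uprel s (fun k => h (b k))].

Section Ext.
Variable G : U -> U -> Prop.
Hypothesis HG : EP G.
Variable e : U -> nat.
Hypothesis He : forall a b, (exists y, G a y) -> (exists y, G b y) -> e a = e b -> a = b.
Variable x : U.

Definition extw m (w : 'I_m -> U) (j : option 'I_m) : U :=
  match j with None => x | Some i => w i end.
Definition extv t m (z : fcar (M t)) (v : 'I_m -> fcar (M t)) (j : option 'I_m) :=
  match j with None => z | Some i => v i end.

Definition condw n t (z : fcar (M t)) m (w : 'I_m -> U) (v : 'I_m -> fcar (M t)) :=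
  [/\ forall i, B t (v i),
      forall i y, G (w i) y -> e (w i) < n -> v i = rep y t,
      forall j j', extw m w j = extw m w j' <-> extv t m z v j = extv t m z v j'
    & forall s (b : 'I_(ar L s) -> option 'I_m),
        uprel s (fun k => extw m w (b k)) <-> frel (M t) s (fun k => extv t m z v (b k))].

Definition Cond n t (z : fcar (M t)) :=
  B t z /\ forall m, m <= n -> forall w : 'I_m -> U, exists v, condw n t z m w v.

Lemma Cond_mono n n' t z : n <= n' -> Cond n' t z -> Cond n t z.
Proof.
move=> le [Bz H]; split => // m lm w.
have [v [v1 v2 v3 v4]] := H m (leq_trans lm le) w.
exists v; split => // i y Gy lt; apply: v2 => //; exact: leq_trans lt le.
Qed.

Definition SB m := {s : sym L & {ffun 'I_(ar L s) -> option 'I_m}}.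
Definition TS n m := ({ffun 'I_m -> 'I_n.+1} * {ffun (option 'I_m * option 'I_m) -> bool} *
   {ffun SB m -> bool})%type.

Definition typ n m (w : 'I_m -> U) : TS n m :=
  ([ffun i => inord (if `[< (exists y, G (w i) y) /\ e (w i) < n >] then e (w i) else n)],
   [ffun p : option 'I_m * option 'I_m => `[< extw m w p.1 = extw m w p.2 >]],
   [ffun sb : SB m => `[< uprel (tag sb) (fun k => extw m w (tagged sb k)) >]]).

Lemma typ_transfer n t z m (w1 w2 : 'I_m -> U) v :
  typ n m w1 = typ n m w2 -> condw n t z m w1 v -> condw n t z m w2 v.
Proof.
rewrite /typ => [[E1 E2 E3]] [v1 v2 v3 v4]; split => //.
- move=> i y Gy lt.
  have := f_equal (fun f : {ffun 'I_m -> 'I_n.+1} => f i) E1; rewrite !ffunE.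
  have -> : `[< (exists y, G (w2 i) y) /\ e (w2 i) < n >] = true.
    by apply/asboolP; split => //; exists y.
  case: asboolP => [[dom1 lt1]|_] /(f_equal (@nat_of_ord _)); rewrite !inordK ?ltnS ?leqnn //;
    try exact: ltnW.
  + move=> Ee; have Ew : w1 i = w2 i by apply: He => //; exists y.
    apply: v2 => //; by rewrite Ew.
  + move=> En; by rewrite En ltnn in lt.
- move=> j j'; rewrite -v3.
  have := f_equal (fun f : {ffun (option 'I_m * option 'I_m) -> bool} => f (j, j')) E2; rewrite !ffunE /=.
  by case: asboolP; case: asboolP => // H1 H2 _; split => // /H1.
- move=> s b; rewrite -v4.
  have := f_equal (fun f : {ffun SB m -> bool} => f (Tagged (fun s => {ffun 'I_(ar L s) -> option 'I_m}) (finfun b))) E3.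
  rewrite !ffunE /=.
  set bb := finfun b; have Eb : forall k, bb k = b k by move=> k; rewrite ffunE.
  have F1 : (fun k => extw m w1 (bb k)) = (fun k => extw m w1 (b k)).
    by apply: functional_extensionality => k; rewrite Eb.
  have F2 : (fun k => extw m w2 (bb k)) = (fun k => extw m w2 (b k)).
    by apply: functional_extensionality => k; rewrite Eb.
  rewrite F1 F2.
  by case: asboolP; case: asboolP => // H1 H2 _; split => // /H1.
Qed.


Definition Jn n := {m : 'I_n.+1 & TS n m}.
Definition realized n (p : Jn n) := exists w : 'I_(tag p) -> U, typ n (tag p) w = tagged p.
Definition rr n (p : Jn n) : 'I_(tag p) -> U :=
  match excluded_middle_informative (realized n p) with
  | left h => proj1_sig (constructive_indefinite_description _ h)
  | right _ => fun _ => x end.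
Lemma rr_typ n p : realized n p -> typ n (tag p) (rr n p) = tagged p.
Proof.
rewrite /rr => r; case: excluded_middle_informative => // h.
by case: constructive_indefinite_description.
Qed.

Definition BI n := option {p : Jn n & 'I_(tag p)}.
Definition wb n (j : BI n) : U :=
  match j with None => x | Some q => rr n (tag q) (tagged q) end.

Lemma X_D n : D (fun t => exists z, Cond n t z).
Proof.
have [h [h1 h2 h3 h4]] := HG (BI n) (wb n).
have T2 : D (fun t => forall j, B t (rep (h j) t)) by apply: (D_all HD) => j; exact: h2.
apply: (D_mono HD (D_and HD (los HD h) T2)) => t [[L1 L2] L3].
exists (rep (h None) t); split; first exact: L3.
move=> m lm w.
pose p : Jn n := existT (fun m : 'I_n.+1 => TS n m) (@Ordinal n.+1 m lm) (typ n m w).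
have rp : realized n p by exists w.
pose io (j : option 'I_m) : BI n :=
  match j with None => None | Some i => Some (existT (fun p : Jn n => 'I_(tag p)) p i) end.
pose v (i : 'I_m) := rep (h (io (Some i))) t.
exists v; apply: (typ_transfer n t _ m (rr n p) w v); first by rewrite (rr_typ n p rp).
have Ew : forall j, extw m (rr n p) j = wb n (io j) by case.
have Ev : forall j, extv t m (rep (h None) t) v j = rep (h (io j)) t by case.
split.
- move=> i; exact: L3.
- move=> i y Gy _; rewrite /v (h1 (io (Some i)) y Gy) //.
- move=> j j'; rewrite Ew Ew Ev Ev -h3; exact: L1.
- move=> s b.
  have F1 : (fun k => extw m (rr n p) (b k)) = (fun k => wb n (io (b k))).
    by apply: functional_extensionality => k; rewrite Ew.
  have F2 : (fun k => extv t m (rep (h None) t) v (b k)) = (fun k => rep (h (io (b k))) t).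
    by apply: functional_extensionality => k; rewrite Ev.
  rewrite F1 F2 (h4 s (fun k => io (b k))); exact: L2.
Qed.


Definition Xn n t := exists z, Cond n t z.
Definition ell t := \max_(i in [pred i : 'I_t.+1 | `[< Xn i t >]]) (i : nat).
Definition ys t : fcar (M t) :=
  match excluded_middle_informative (Xn (ell t) t) with
  | left h => proj1_sig (constructive_indefinite_description _ h)
  | right _ => rep x t end.

Lemma ys_cond n t : Xn n t -> n <= t -> Cond n t (ys t).
Proof.
move=> Xnt nt.
have nt' : n < t.+1 by [].
have H1 : n <= ell t.
  rewrite /ell; apply: (@leq_bigmax_cond _ _ (fun i : 'I_t.+1 => (i : nat)) (Ordinal nt')).
  rewrite inE /=; exact/asboolP.
have [i0 Hi0 Ei0] : {i0 | i0 \in [pred i : 'I_t.+1 | `[< Xn i t >]] & ell t = i0}.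
  apply: eq_bigmax_cond; apply/card_gt0P; exists (Ordinal nt'); rewrite inE /=; exact/asboolP.
move: Hi0; rewrite inE /= => /asboolP; rewrite -Ei0 => XL.
apply: (Cond_mono n (ell t)) => //.
rewrite /ys; case: excluded_middle_informative => // h.
by case: constructive_indefinite_description.
Qed.


Lemma ext_EP : EP (fun a b => G a b \/ (a = x /\ b = mk D (M:=M) (fun t => ys t))).
Proof.
move=> I w.
pose m := #|I|.
pose w0 (i : 'I_m) := w (enum_val i).
pose n := m + \sum_(i : I) (e (w i)).+1.
have Hn : forall i, e (w i) < n.
  move=> i; rewrite /n (bigD1 i) //=; apply: leq_trans (leq_addr _ _) (leq_addl _ _).
have mn : m <= n by apply: leq_addr.
pose T3 t := Xn n t /\ n <= t.
have DT3 : D T3 by apply: (D_and HD (X_D n) (D_ge HD n)).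
pose vv t : 'I_m -> fcar (M t) :=
  match excluded_middle_informative (T3 t) with
  | left h => proj1_sig (constructive_indefinite_description _
       (proj2 (ys_cond n t (proj1 h) (proj2 h)) m mn w0))
  | right _ => fun i => rep (w0 i) t end.
have vvP : forall t, T3 t -> condw n t (ys t) m w0 (vv t).
  move=> t Ht; rewrite /vv; case: excluded_middle_informative => // h.
  by case: constructive_indefinite_description.
have w0E : forall i, w0 (enum_rank i) = w i by move=> i; rewrite /w0 enum_rankK.
pose ka (i : I) : SP := fun t => vv t (enum_rank i).
case: (@internal_map L D M HD I (fun i j => w i = w j) (fun s b => uprel s (fun k => w (b k))) ka T3 DT3).
  move=> t Ht; have [v1 v2 v3 v4] := vvP t Ht; split.
  - move=> i j; have := v3 (Some (enum_rank i)) (Some (enum_rank j)).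
    rewrite /= !w0E => H; exact: iff_sym H.
  - move=> s b; have := v4 s (fun k => Some (enum_rank (b k))).
    have -> : (fun k => extw m w0 (Some (enum_rank (b k)))) = (fun k => w (b k)).
      by apply: functional_extensionality => k /=; rewrite w0E.
    by [].
move=> IM1 IM2.
exists (fun i => mk D (ka i)); split.
- move=> i y [Gy|[Ex Ey]].
  + rewrite -(mk_uprep y); apply/(mk_eq HD); apply: (D_mono HD DT3) => t Ht.
    have [v1 v2 v3 v4] := vvP t Ht; apply: v2; rewrite w0E //.
  + rewrite Ey; apply/(mk_eq HD); apply: (D_mono HD DT3) => t Ht.
    have [v1 v2 v3 v4] := vvP t Ht.
    have := v3 (Some (enum_rank i)) None; rewrite /= w0E Ex => H; exact: (proj1 H erefl).
- move=> i; rewrite /Qs; apply: (D_mono HD (D_and HD DT3 (uprep_mk HD (ka i)))) => t [Ht E].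
  rewrite -E; have [v1 v2 v3 v4] := vvP t Ht; exact: v1.
- exact: IM1.
- exact: IM2.
Qed.

End Ext.
End Sat.

Unset Implicit Arguments.
Unset Strict Implicit.
Unset Printing Implicit Defensive.

Section Build.
Variable L : signature.
Variable D : (nat -> Prop) -> Prop.
Variable M : nat -> FStruct L.
Hypothesis HD : nonprincipal_ultrafilter D.
Variable B : forall t, fcar (M t) -> Prop.

Local Notation U := (upcar L D M).
Local Notation rep := (uprep L D M).
Local Notation uprel := (uprel L D M).
Local Notation EP := (EP L D M B).

Lemma EP_fun G a y1 y2 : EP G -> G a y1 -> G a y2 -> y1 = y2.
Proof.
move=> HG G1 G2; have [h [h1 _ _ _]] := HG unit (fun _ => a).
by rewrite -(h1 tt y1 G1) (h1 tt y2 G2).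
Qed.

Lemma EP_anti (G G' : U -> U -> Prop) : EP G -> (forall a b, G' a b -> G a b) -> EP G'.
Proof.
move=> HG sub I w; have [h [h1 h2 h3 h4]] := HG I w; exists h; split => //.
move=> i y /sub; exact: h1.
Qed.

Definition PP (le : U -> U -> Prop) (S : classical_sets.set (U * U)) :=
  EP (fun a b => S (a, b)) /\
  forall a b, (exists y, S (b, y)) -> le a b -> exists y, S (a, y).

Lemma main_build (le : U -> U -> Prop) :
  good_order le -> EP (fun _ _ => False) ->
  exists f : U -> U, injective f /\
    (forall s (a : 'I_(ar L s) -> U), uprel s a <-> uprel s (fun k => f (a k))) /\
    forall u, Qs L D M B (f u).
Proof.
move=> [tot anti mn cnt] EP0.
have [A [[PA1 PA2] Amax]] : exists A, PP le A /\ forall B', classical_sets.proper A B' -> ~ PP le B'.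
  apply: classical_sets.Zorn_bigcup => F FP Ftot.
  set UF := classical_sets.bigcup F id.
  have UFE : forall p, UF p <-> exists2 X, F X & X p by [].
  have sublem : forall W a y0 y, F W -> W (a, y0) -> UF (a, y) -> W (a, y).
    move=> W a y0 y FW W0 /UFE [Z FZ Zy].
    case: (Ftot _ _ FZ FW) => [ZW|WZ]; first exact: ZW.
    have -> // : y = y0.
    exact: (EP_fun (fun a b => Z (a, b)) a y y0 (proj1 (FP _ FZ)) Zy (WZ _ W0)).
  split.
  - case: (classic (exists X, F X)) => [[X0 FX0]|nF]; last first.
      apply: (EP_anti (fun _ _ => False) _ EP0) => a b /UFE [X FX _]; apply: nF; by exists X.
    move=> I w.
    suff [X [FX HX]] : exists X, F X /\ forall i y, UF (w i, y) -> X (w i, y).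
      have [h [h1 h2 h3 h4]] := proj1 (FP _ FX) I w; exists h; split => //.
      move=> i y /HX; exact: h1.
    suff : forall r : seq I, exists X, F X /\ forall i, i \in r -> forall y, UF (w i, y) -> X (w i, y).
      move=> /(_ (enum I)) [X [FX HX]]; exists X; split => // i y; apply: HX; by rewrite mem_enum.
    elim=> [|i r [X [FX HX]]]; first by exists X0.
    case: (classic (exists y0, UF (w i, y0))) => [[y0 /UFE [Y FY Y0]]|ny].
    + case: (Ftot _ _ FX FY) => [XY|YX].
      * exists Y; split => // j; rewrite inE => /orP [/eqP ->|jr] y Uy.
        -- exact: sublem _ _ _ _ FY Y0 Uy.
        -- exact: XY (HX j jr y Uy).
      * exists X; split => // j; rewrite inE => /orP [/eqP ->|jr] y Uy.
        -- exact: sublem _ _ _ _ FX (YX _ Y0) Uy.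
        -- exact: HX j jr y Uy.
    + exists X; split => // j; rewrite inE => /orP [/eqP ->|jr] y Uy.
      * exfalso; apply: ny; by exists y.
      * exact: HX j jr y Uy.
  - move=> a b [y /UFE [X FX Xy]] lab.
    have [y' Xy'] := proj2 (FP _ FX) a b (ex_intro _ y Xy) lab.
    exists y'; apply/UFE; by exists X.
have dom : forall a, exists y, A (a, y).
  apply: NNPP => nd.
  have [x [nx xmin]] := mn (fun a => ~ exists y, A (a, y)) (not_all_ex_not _ _ nd).
  have [e He] := cnt x.
  have seg : forall a, (exists y, A (a, y)) -> le a x /\ a <> x.
    move=> a da; split; last by move=> E; apply: nx; rewrite -E.
    case: (tot a x) => // lxa; exfalso; apply: nx; exact: PA2 _ _ da lxa.
  have He' : forall a b, (exists y, A (a, y)) -> (exists y, A (b, y)) -> e a = e b -> a = b.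
    move=> a b da db; apply: He; exact: seg.
  pose y := mk D (M:=M) (fun t => ys L D M B (fun a b => A (a, b)) e x t).
  have EPn := ext_EP L D M HD B (fun a b => A (a, b)) PA1 e He' x.
  apply: (Amax (fun p => A p \/ (p.1 = x /\ p.2 = y))).
  + split; first by move=> p Ap; left.
    move=> H; apply: nx; exists y; exact: H (x, y) (or_intror (conj erefl erefl)).
  + split; first exact: EPn.
    move=> a b [y' [Ay'|[/= E1 E2]]] lab.
    * have [y'' Ay''] := PA2 a b (ex_intro _ y' Ay') lab; by exists y''; left.
    * case: (classic (exists y'', A (a, y''))) => [[y'' Ay'']|na]; first by exists y''; left.
      have := xmin a na => lxa; have lab' : le a x by rewrite -E1.
      have E := anti a x lab' lxa.
      exists y; right; by rewrite /= E.
pose f a := proj1_sig (constructive_indefinite_description _ (dom a)).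
have fP : forall a, A (a, f a) by move=> a; rewrite /f; case: constructive_indefinite_description.
exists f; split; last split.
- move=> a1 a2 E.
  have [h [h1 _ h3 _]] := PA1 bool (fun b => if b then a1 else a2).
  apply: (proj1 (h3 true false)); by rewrite (h1 true _ (fP a1)) (h1 false _ (fP a2)).
- move=> s a; have [h [h1 _ _ h4]] := PA1 'I_(ar L s) a.
  rewrite (h4 s id).
  have -> : (fun k => h k) = (fun k => f (a k)).
    apply: functional_extensionality => k; exact: h1 k _ (fP (a k)).
  by [].
- move=> u; have [h [h1 h2 _ _]] := PA1 unit (fun _ => u).
  rewrite -(h1 tt _ (fP u)); exact: h2.
Qed.

End Build.

Unset Implicit Arguments.
Unset Strict Implicit.
Unset Printing Implicit Defensive.

Section Main.
Variable L : signature.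
Variable D : (nat -> Prop) -> Prop.
Variable M : nat -> FStruct L.
Variable XA : upcar L D M -> Prop.
Hypothesis HD : nonprincipal_ultrafilter D.
Hypothesis Htr : trending L D M.
Variable dflt : forall t, fcar (M t).
Variable l : nat.
Hypothesis Hsmall : small_RD_prop L (ultraproduct L D M) XA l.

Local Notation U := (upcar L D M).
Local Notation N := (ultraproduct L D M).
Local Notation rep := (uprep L D M).
Local Notation uprel := (uprel L D M).
Local Notation frel := Defs.frel.

Lemma tau_ex i : exists t, forall j : 'I_i.+1, embeds L (M j) (M t).
Proof.
case: Htr => _ _ H3; apply: (D_ex HD); apply: (D_all HD) => j; exact: H3.
Qed.
Definition tau i := proj1_sig (constructive_indefinite_description _ (tau_ex i)).
Lemma tauP i (j : 'I_i.+1) : embeds L (M j) (M (tau i)).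
Proof. rewrite /tau; case: constructive_indefinite_description => t H /=; exact: H. Qed.

Definition Bi i : FStruct L := M (tau i).
Lemma Bi_age i : in_age L N (Bi i).
Proof. apply: (emb_to_N HD dflt); case: Htr => _ _ H3; exact: H3. Qed.

Variable k : nat.
Variable ct : forall t, (fcar (M t) -> Prop) -> 'I_k.

Definition CCspec i (C : FStruct L) :=
  in_age L N C /\
      forall c : (fcar C -> Prop) -> 'I_k,
        exists B' : fcar C -> Prop, is_copy L C (Bi i) (fun _ => True) B' /\
          exists S : {set 'I_k}, #|S| <= l /\
            forall Y : fcar C -> Prop, is_copy L C N XA Y -> subset_of _ Y B' ->
              c Y \in S.
Lemma CC_ex i : exists C, CCspec i C.
Proof. exact: Hsmall k (Bi i) (Bi_age i). Qed.
Definition CC i := proj1_sig (constructive_indefinite_description _ (CC_ex i)).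
Lemma CCP i : CCspec i (CC i).
Proof. rewrite /CC; by case: constructive_indefinite_description. Qed.

Definition E i t := embeds L (CC i) (M t).
Lemma E_D i : D (E i).
Proof. apply: (N_to_emb HD); exact: proj1 (CCP i). Qed.

Definition W i t := (forall j : 'I_i.+1, E j t) /\ i <= t.
Lemma W_D i : D (W i).
Proof. apply: (D_and HD (D_all HD (fun j : 'I_i.+1 => E_D j)) (D_ge HD i)). Qed.

Definition sig t := \max_(i in [pred i : 'I_t.+1 | `[< W i t >]]) (i : nat).
Lemma sigP j t : W j t -> j <= sig t /\ W (sig t) t.
Proof.
move=> Wj; have nt' : j < t.+1 by rewrite ltnS; exact: proj2 Wj.
split.
  rewrite /sig; apply: (@leq_bigmax_cond _ _ (fun i : 'I_t.+1 => (i : nat)) (Ordinal nt')).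
  rewrite inE /=; exact/asboolP.
have [i0 Hi0 Ei0] : {i0 | i0 \in [pred i : 'I_t.+1 | `[< W i t >]] & sig t = i0}.
  apply: eq_bigmax_cond; apply/card_gt0P; exists (Ordinal nt'); rewrite inE /=; exact/asboolP.
move: Hi0; rewrite inE /= => /asboolP; by rewrite -Ei0.
Qed.

Definition good t (Bt : fcar (M t) -> Prop) (St : {set 'I_k}) :=
  [/\ #|St| <= l,
      (forall Y : fcar (M t) -> Prop, is_copy L (M t) N XA Y -> subset_of _ Y Bt -> ct t Y \in St)
    & forall j, j <= sig t -> exists g : fcar (M j) -> fcar (M t),
        @is_emb L (M j) (M t) g /\ forall u, Bt (g u)].

Lemma good_ex t : W 0 t -> exists Bt St, good t Bt St.
Proof.
move=> W0.
have [_ Wi] := sigP 0 t W0.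
set i := sig t in Wi *.
have [gam gamE] : exists gam : fcar (CC i) -> fcar (M t), @is_emb L (CC i) (M t) gam.
  have [g Hg] := proj1 Wi (@Ordinal i.+1 i (ltnSn i)); by exists g.
pose img (X : fcar (CC i) -> Prop) := fun y => exists u, X u /\ gam u = y.
have [B'' [cB [S [Sl HS]]]] := proj2 (CCP i) (fun X => ct t (img X)).
exists (img B''), S; split => //.
- move=> Y HY YB.
  have YI : forall z, Y z -> exists y, gam y = z.
    move=> z /YB [u [_ <-]]; by exists u.
  have HY' := @sub_iso_pre L N (CC i) (M t) XA Y gam gamE HY YI.
  have : (fun X => ct t (img X)) (fun y => Y (gam y)) \in S.
    apply: HS => // u Yu; have [u' [Bu' Eu']] := YB _ Yu.
    by rewrite -(proj1 gamE _ _ Eu').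
  suff -> : img (fun y => Y (gam y)) = Y by [].
  apply: functional_extensionality => z; apply: propositional_extensionality; split.
  + by move=> [u [Yu <-]].
  + move=> Yz; have [u Eu] := YI z Yz; exists u; by rewrite Eu.
- move=> j ji.
  have [e1 [e1i e1r]] := tauP i (@Ordinal i.+1 j ji).
  have [f2 [f2B f2i f2s f2r]] := cB.
  exists (fun u => gam (f2 (exist _ (e1 u) I))); split.
  + split.
    * move=> u1 u2 /(proj1 gamE) /f2i E; apply: e1i.
      exact: (f_equal (@proj1_sig _ _) E).
    * move=> s a; rewrite e1r.
      rewrite (f2r s (fun k => exist (fun _ => True) (e1 (a k)) I)).
      exact: (proj2 gamE s (fun k => f2 (exist (fun _ => True) (e1 (a k)) I))).
  + move=> u; exists (f2 (exist _ (e1 u) I)); split => //.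
Qed.

Lemma good_ex2 t : W 0 t -> exists p : (fcar (M t) -> Prop) * {set 'I_k}, good t p.1 p.2.
Proof. move=> /good_ex [Bt [St H]]; by exists (Bt, St). Qed.
Definition BS t : (fcar (M t) -> Prop) * {set 'I_k} :=
  match excluded_middle_informative (W 0 t) with
  | left h => proj1_sig (constructive_indefinite_description _ (good_ex2 t h))
  | right _ => (fun _ => True, set0) end.
Lemma BSP t : W 0 t -> good t (BS t).1 (BS t).2.
Proof.
rewrite /BS => h; case: excluded_middle_informative => // h'.
by case: constructive_indefinite_description.
Qed.
Definition Bt t := (BS t).1.

Lemma W0 j t : W j t -> W 0 t.
Proof.
move=> [H1 H2]; split => // i; rewrite (ord1 i).
exact: H1 (@Ordinal j.+1 0 (ltn0Sn j)).
Qed.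

Lemma gW j t : W j t -> exists g : fcar (M j) -> fcar (M t),
  @is_emb L (M j) (M t) g /\ forall u, Bt t (g u).
Proof.
move=> Wj; have [_ _ H3] := BSP t (W0 j t Wj); apply: H3; exact: proj1 (sigP j t Wj).
Qed.

Lemma EP0 : EP L D M Bt (fun _ _ => False).
Proof.
move=> I w.
have [j [L1 L2]] := D_ex HD (los HD w).
pose ka (i : I) : seqprod L M := fun t =>
  match excluded_middle_informative (W j t) with
  | left h => proj1_sig (constructive_indefinite_description _ (gW j t h)) (rep (w i) j)
  | right _ => dflt t end.
case: (@internal_map L D M HD I (fun i i' => w i = w i') (fun s b => uprel s (fun k => w (b k))) ka (W j) (W_D j)).
  move=> t Wt; rewrite /ka; case: excluded_middle_informative => // h.
  case: constructive_indefinite_description => g /= [[gi gr] gB]; split.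
  - move=> i i'; rewrite L1; split; [exact: gi | by move=> ->].
  - move=> s b; rewrite L2; exact: gr.
move=> IM1 IM2.
exists (fun i => mk D (ka i)); split => //.
move=> i; rewrite /Qs; apply: (D_mono HD (D_and HD (W_D j) (uprep_mk HD (ka i)))) => t [Wt E].
rewrite -E /ka; case: excluded_middle_informative => // h.
by case: constructive_indefinite_description => g /= [_ gB].
Qed.


Lemma io_inj : injective (fun (u : U) (n : nat) => exists t, n = pickle (t, nat_of_ord (enum_rank (rep u t)))).
Proof.
move=> u1 u2 E.
have H : forall t, rep u1 t = rep u2 t.
  move=> t.
  have : exists t', pickle (t, nat_of_ord (enum_rank (rep u1 t))) = pickle (t', nat_of_ord (enum_rank (rep u2 t'))).
    have := f_equal (fun f => f (pickle (t, nat_of_ord (enum_rank (rep u1 t))))) E => /= <-.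
    by exists t.
  move=> [t' /(pcan_inj pickleK) [Et Er]]; subst t'.
  apply: enum_rank_inj; exact: ord_inj.
have : rep u1 = rep u2 by apply: functional_extensionality_dep.
by move=> Er; rewrite -(mk_uprep u1) -(mk_uprep u2) Er.
Qed.

Lemma final_main (ch : CH) (finXA : finite_set _ XA) (c : (U -> Prop) -> 'I_k) (Z : nat -> Prop)
  (Hc : forall Y : U -> Prop, is_copy L N N XA Y -> forall j : 'I_k,
          c Y = j <-> D (fun t => [/\ Z t, sub_iso L (M t) N (coord_set L D M Y t) Y
                                     & ct t (coord_set L D M Y t) = j])) :
    exists f : U -> U,
      (injective f /\ forall (s : sym L) (a : 'I_(ar L s) -> U),
                        uprel s a <-> uprel s (fun i => f (a i))) /\
      exists S : {set 'I_k}, #|S| <= l /\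
        forall Y : U -> Prop, is_copy L N N XA Y ->
          subset_of _ Y (fun y => exists x, f x = y) -> c Y \in S.
Proof.
have [S0 DS0] := D_pigeon HD (fun t => (BS t).2) (W_D 0).
have [le Hle] := omega1_order io_inj ch.
have [f [fi [fr fQ]]] := main_build L D M HD Bt le Hle EP0.
exists f; split => //; exists S0; split.
  have [t [Wt <-]] := D_ex HD DS0; by have [] := BSP t Wt.
move=> Y Ycp Ysub.
case: finXA => lXA HXA.
have Ycp' := Ycp; case: Ycp' => fY [fYY fYi fYs fYr].
pose x0 : U := mk D dflt.
pose u (j : 'I_(length lXA)) : U :=
  let a := List.nth j lXA x0 in
  match excluded_middle_informative (XA a) with
  | left p => fY (exist _ a p) | right _ => x0 end.
have Ycov : forall a, Y a -> exists j, u j = a.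
  move=> a /fYs [[xa pa] <-].
  have [n0 [n0l En0]] := List.In_nth lXA xa x0 (proj1 (HXA xa) pa).
  have n0l' : n0 < length lXA by apply/ltP.
  exists (Ordinal n0l'); rewrite /u /=; move: En0; generalize (List.nth n0 lXA x0) => a0 Ea0; subst a0.
  case: excluded_middle_informative => // p; congr fY; exact: sig_eq.
have DY : D (fun t => forall j, Y (u j) -> Bt t (rep (u j) t)).
  apply: (D_all HD) => j; case: (classic (Y (u j))) => Yj.
  + have [v Ev] := Ysub _ Yj; have := fQ v; rewrite Ev /Qs => Q.
    apply: (D_mono HD Q) => t //.
  + apply: (D_true HD) => t //.
have DC := proj1 (Hc Y Ycp (c Y)) erefl.
have [t [[[Wt ES] HY] [_ Hco Hct]]] := D_ex HD (D_and HD (D_and HD DS0 DY) DC).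
have [_ H2 _] := BSP t Wt.
rewrite -Hct -ES; apply: H2.
- exact: sub_iso_comp Ycp (sub_iso_inv Hco).
- move=> y [a [Ya <-]]; have [j Ej] := Ycov a Ya; rewrite -Ej; apply: HY; by rewrite Ej.
Qed.

End Main.
Unset Implicit Arguments.
Unset Strict Implicit.
Unset Printing Implicit Defensive.

Lemma main_lemma (L : signature) (D : (nat -> Prop) -> Prop)
  (M : nat -> FStruct L) (XA : car (ultraproduct L D M) -> Prop) :
  CH -> nonprincipal_ultrafilter D -> trending L D M -> finite_set _ XA ->
  forall l, small_RD_prop L (ultraproduct L D M) XA l -> int_BRD_prop L D M XA l.
Proof.
move=> ch HD Htr finXA l Hs k c [Z [DZ [ct Hc]]].
case: (classic (forall t, exists y : fcar (M t), True)) => Hinh.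
  pose dflt t := proj1_sig (constructive_indefinite_description _ (Hinh t)).
  exact: (final_main L D M XA HD Htr dflt l Hs k ct ch finXA c Z Hc).
have [t0 Ht0] := not_all_ex_not _ _ Hinh.
have Ue : upcar L D M -> False.
  move=> u; apply: Ht0; by exists (uprep L D M u t0).
have l1 : 0 < l.
  pose Bv := FStructMk L void
     (fun s a => uprel L D M s (fun i => of_void (upcar L D M) (a i))).
  have Bage : in_age L (ultraproduct L D M) Bv.
    exists (of_void (upcar L D M)); split; [by case | by []].
  have [C [[g [gi gr]] HC]] := Hs 1 Bv Bage.
  have [B' [_ [S [Sl HS]]]] := HC (fun _ => ord0).
  have Y0 : is_copy L C (ultraproduct L D M) XA (fun _ => False).
    exists (fun x => match Ue (proj1_sig x) with end); split.
    - move=> x; case: (Ue (proj1_sig x)).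
    - move=> x; case: (Ue (proj1_sig x)).
    - by [].
    - move=> s a; rewrite (gr s).
      have -> : (fun i => g (match Ue (proj1_sig (a i)) with end)) = (fun i => proj1_sig (a i)).
        apply: functional_extensionality => i; case: (Ue (proj1_sig (a i))).
      by [].
  have := HS _ Y0 (fun _ F => match F with end) => H.
  apply: leq_trans Sl; apply/card_gt0P; by exists ord0.
exists id; split; first by split => // s a.
exists [set c (fun _ => False)]; split; first by rewrite cards1.
move=> Y _ _.
have -> : Y = (fun _ => False).
  apply: functional_extensionality => u; case: (Ue u).
by rewrite set11.
Qed.

Theorem mainTheorem6 (L : signature) (D : (nat -> Prop) -> Prop)
  (M : nat -> FStruct L) (XA : car (ultraproduct L D M) -> Prop) :
  CH ->
  nonprincipal_ultrafilter D ->
  trending L D M ->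
  finite_set _ XA ->
  finite_small_RD L (ultraproduct L D M) XA ->
  finite_int_BRD L D M XA /\
  (forall d T : nat,
      least (small_RD_prop L (ultraproduct L D M) XA) d ->
      least (int_BRD_prop L D M XA) T ->
      T <= d).
Proof.
move=> ch HD Htr finXA [l0 Hl0]; split.
- exists l0; exact: main_lemma.
- move=> d T [Hd _] [_ HT]; apply: HT; exact: main_lemma.
Qed.
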